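(* Let $d = 2$ and $\hat X \in U(2)$. Let $F = \int d\psi\, |\langle\psi|\hat X|\psi\rangle|^2$ and $D = \sqrt{\int d\psi\, |\langle\psi|\hat X|\psi\rangle|^4 - F^2}$. Then $$D = \frac{1-F}{\sqrt 5}.$$
   Context: $d\psi$ denotes the unitarily invariant (Haar-induced) probability measure on unit vectors of $\mathbb{C}^2$. *)

(* Defs.v *)
From Stdlib Require Import Reals.
From Coquelicot Require Import Coquelicot.
Open Scope R_scope.

(* A 2x2 complex matrix, entries indexed by i, j in {0,1}. *)
Definition mat2 := nat -> nat -> C.

Definition unitary2 (X : mat2) : Prop :=
  forall i j : nat, (i < 2)%nat -> (j < 2)%nat ->
    Cplus (Cmult (Cconj (X 0%nat i)) (X 0%nat j))
          (Cmult (Cconj (X 1%nat i)) (X 1%nat j))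
    = (if Nat.eqb i j then RtoC 1 else RtoC 0).

Definition vec2 := nat -> C.

Definition expval (X : mat2) (psi : vec2) : C :=
  Cplus
    (Cplus (Cmult (Cconj (psi 0%nat)) (Cmult (X 0%nat 0%nat) (psi 0%nat)))
           (Cmult (Cconj (psi 0%nat)) (Cmult (X 0%nat 1%nat) (psi 1%nat))))
    (Cplus (Cmult (Cconj (psi 1%nat)) (Cmult (X 1%nat 0%nat) (psi 0%nat)))
           (Cmult (Cconj (psi 1%nat)) (Cmult (X 1%nat 1%nat) (psi 1%nat)))).

Definition cis (t : R) : C := (cos t, sin t).

(* Hopf coordinates of the unit sphere S^3 of C^2:
   psi = (cos a e^{i b}, sin a e^{i g}),  a in [0,pi/2], b,g in [0,2pi). *)
Definition hopf_psi (a b g : R) : vec2 :=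
  fun i => if Nat.eqb i 0 then Cmult (RtoC (cos a)) (cis b)
           else Cmult (RtoC (sin a)) (cis g).

(* Integral against the unitarily invariant (Haar-induced) probability
   measure d psi on unit vectors of C^2, i.e. the normalized round measure
   on S^3, written in Hopf coordinates: the volume element is
   sin a cos a da db dg and the total volume is 2 pi^2. *)
Definition haar_int (f : vec2 -> R) : R :=
  / (2 * PI ^ 2) *
  RInt (fun a =>
    RInt (fun b =>
      RInt (fun g => f (hopf_psi a b g) * sin a * cos a) 0 (2 * PI))
      0 (2 * PI))
    0 (PI / 2).

(* Main.v *)
Require Import Defs.
From Stdlib Require Import Reals Lra Lia.
From Coquelicot Require Import Coquelicot.
Open Scope R_scope.

Definition W2 (Ar Ai t al be ga de C S : R) : R :=
  (Ar + t*(C*al+S*be))^2 + (Ai + t*(C*ga+S*de))^2.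

Definition k2 (Ar Ai t al be ga de : R) : R :=
  (Ai^2 + Ar^2 + (1/2)*al^2*t^2 + (1/2)*be^2*t^2 + (1/2)*de^2*t^2 + (1/2)*ga^2*t^2).

Definition Q2 (Ar Ai t al be ga de C S : R) : R :=
  (0 - 2*Ai*C*de*t + 2*Ai*S*ga*t - 2*Ar*C*be*t + 2*Ar*S*al*t + (1/2)*C*S*al^2*t^2 - (1/2)*C*S*be^2*t^2 - (1/2)*C*S*de^2*t^2 + (1/2)*C*S*ga^2*t^2 - C^2*al*be*t^2 - C^2*de*ga*t^2).

Definition R2 (Ar Ai t al be ga de C S : R) : R :=
  ((1/2)*al^2*t^2 + (1/2)*be^2*t^2 + (1/2)*de^2*t^2 + (1/2)*ga^2*t^2).

Definition k4 (Ar Ai t al be ga de : R) : R :=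
  (4*Ai*Ar*al*ga*t^2 + 4*Ai*Ar*be*de*t^2 + 2*Ai^2*Ar^2 + Ai^2*al^2*t^2 + Ai^2*be^2*t^2 + 3*Ai^2*de^2*t^2 + 3*Ai^2*ga^2*t^2 + Ai^4 + 3*Ar^2*al^2*t^2 + 3*Ar^2*be^2*t^2 + Ar^2*de^2*t^2 + Ar^2*ga^2*t^2 + Ar^4 + al*be*de*ga*t^4 + (3/4)*al^2*be^2*t^4 + (1/4)*al^2*de^2*t^4 + (3/4)*al^2*ga^2*t^4 + (3/8)*al^4*t^4 + (3/4)*be^2*de^2*t^4 + (1/4)*be^2*ga^2*t^4 + (3/8)*be^4*t^4 + (3/4)*de^2*ga^2*t^4 + (3/8)*de^4*t^4 + (3/8)*ga^4*t^4).

Definition Q4 (Ar Ai t al be ga de C S : R) : R :=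
  (4*Ai*Ar*C*S*al*ga*t^2 - 4*Ai*Ar*C*S*be*de*t^2 - 4*Ai*Ar*C^2*al*de*t^2 - 4*Ai*Ar*C^2*be*ga*t^2 - 4*Ai*Ar^2*C*de*t + 4*Ai*Ar^2*S*ga*t - 4*Ai*C*be^2*de*t^3 - 4*Ai*C*de^3*t^3 - (8/3)*Ai*C^2*S*al*be*de*t^3 + (4/3)*Ai*C^2*S*al^2*ga*t^3 - (4/3)*Ai*C^2*S*be^2*ga*t^3 - 4*Ai*C^2*S*de^2*ga*t^3 + (4/3)*Ai*C^2*S*ga^3*t^3 - (8/3)*Ai*C^3*al*be*ga*t^3 - (4/3)*Ai*C^3*al^2*de*t^3 + (4/3)*Ai*C^3*be^2*de*t^3 - 4*Ai*C^3*de*ga^2*t^3 + (4/3)*Ai*C^3*de^3*t^3 + (8/3)*Ai*S*al*be*de*t^3 + (8/3)*Ai*S*al^2*ga*t^3 + (4/3)*Ai*S*be^2*ga*t^3 + 4*Ai*S*de^2*ga*t^3 + (8/3)*Ai*S*ga^3*t^3 - 4*Ai^2*Ar*C*be*t + 4*Ai^2*Ar*S*al*t + Ai^2*C*S*al^2*t^2 - Ai^2*C*S*be^2*t^2 - 3*Ai^2*C*S*de^2*t^2 + 3*Ai^2*C*S*ga^2*t^2 - 2*Ai^2*C^2*al*be*t^2 - 6*Ai^2*C^2*de*ga*t^2 - 4*Ai^3*C*de*t + 4*Ai^3*S*ga*t - 4*Ar*C*be*de^2*t^3 - 4*Ar*C*be^3*t^3 - 4*Ar*C^2*S*al*be^2*t^3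 - (4/3)*Ar*C^2*S*al*de^2*t^3 + (4/3)*Ar*C^2*S*al*ga^2*t^3 + (4/3)*Ar*C^2*S*al^3*t^3 - (8/3)*Ar*C^2*S*be*de*ga*t^3 - (8/3)*Ar*C^3*al*de*ga*t^3 - 4*Ar*C^3*al^2*be*t^3 + (4/3)*Ar*C^3*be*de^2*t^3 - (4/3)*Ar*C^3*be*ga^2*t^3 + (4/3)*Ar*C^3*be^3*t^3 + 4*Ar*S*al*be^2*t^3 + (4/3)*Ar*S*al*de^2*t^3 + (8/3)*Ar*S*al*ga^2*t^3 + (8/3)*Ar*S*al^3*t^3 + (8/3)*Ar*S*be*de*ga*t^3 + 3*Ar^2*C*S*al^2*t^2 - 3*Ar^2*C*S*be^2*t^2 - Ar^2*C*S*de^2*t^2 + Ar^2*C*S*ga^2*t^2 - 6*Ar^2*C^2*al*be*t^2 - 2*Ar^2*C^2*de*ga*t^2 - 4*Ar^3*C*be*t + 4*Ar^3*S*al*t + C*S*al*be*de*ga*t^4 + (3/4)*C*S*al^2*be^2*t^4 + (1/4)*C*S*al^2*de^2*t^4 + (3/4)*C*S*al^2*ga^2*t^4 + (3/8)*C*S*al^4*t^4 - (5/4)*C*S*be^2*de^2*t^4 + (1/4)*C*S*be^2*ga^2*t^4 - (5/8)*C*S*be^4*t^4 + (3/4)*C*S*de^2*ga^2*t^4 - (5/8)*C*S*de^4*t^4 + (3/8)*C*S*ga^4*t^4 - 2*C^2*al*be*de^2*t^4 - 2*C^2*al*be^3*t^4 - 2*C^2*be^2*de*ga*t^4 - 2*C^2*de^3*ga*t^4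 - 2*C^3*S*al*be*de*ga*t^4 - (3/2)*C^3*S*al^2*be^2*t^4 - (1/2)*C^3*S*al^2*de^2*t^4 + (1/2)*C^3*S*al^2*ga^2*t^4 + (1/4)*C^3*S*al^4*t^4 + (1/2)*C^3*S*be^2*de^2*t^4 - (1/2)*C^3*S*be^2*ga^2*t^4 + (1/4)*C^3*S*be^4*t^4 - (3/2)*C^3*S*de^2*ga^2*t^4 + (1/4)*C^3*S*de^4*t^4 + (1/4)*C^3*S*ga^4*t^4 + C^4*al*be*de^2*t^4 - C^4*al*be*ga^2*t^4 + C^4*al*be^3*t^4 - C^4*al^2*de*ga*t^4 - C^4*al^3*be*t^4 + C^4*be^2*de*ga*t^4 - C^4*de*ga^3*t^4 + C^4*de^3*ga*t^4).

Definition R4 (Ar Ai t al be ga de C S : R) : R :=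
  (4*Ai*Ar*al*ga*t^2 + 4*Ai*Ar*be*de*t^2 + (8/3)*Ai*C*al*be*de*t^3 + (8/3)*Ai*C*al^2*ga*t^3 + (4/3)*Ai*C*be^2*ga*t^3 + 4*Ai*C*de^2*ga*t^3 + (8/3)*Ai*C*ga^3*t^3 + 4*Ai*S*be^2*de*t^3 + 4*Ai*S*de^3*t^3 + Ai^2*al^2*t^2 + Ai^2*be^2*t^2 + 3*Ai^2*de^2*t^2 + 3*Ai^2*ga^2*t^2 + 4*Ar*C*al*be^2*t^3 + (4/3)*Ar*C*al*de^2*t^3 + (8/3)*Ar*C*al*ga^2*t^3 + (8/3)*Ar*C*al^3*t^3 + (8/3)*Ar*C*be*de*ga*t^3 + 4*Ar*S*be*de^2*t^3 + 4*Ar*S*be^3*t^3 + 3*Ar^2*al^2*t^2 + 3*Ar^2*be^2*t^2 + Ar^2*de^2*t^2 + Ar^2*ga^2*t^2 + 4*C*S*al*be*de^2*t^4 + 4*C*S*al*be^3*t^4 + 4*C*S*be^2*de*ga*t^4 + 4*C*S*de^3*ga*t^4 + 2*C^2*al*be*de*ga*t^4 + (3/2)*C^2*al^2*be^2*t^4 + (1/2)*C^2*al^2*de^2*t^4 + (3/2)*C^2*al^2*ga^2*t^4 + (3/4)*C^2*al^4*t^4 - (1/2)*C^2*be^2*de^2*t^4 + (1/2)*C^2*be^2*ga^2*t^4 - (1/4)*C^2*be^4*t^4 + (3/2)*C^2*de^2*ga^2*t^4 - (1/4)*C^2*de^4*t^4 + (3/4)*C^2*ga^4*t^4 + 2*S^2*be^2*de^2*t^4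 + S^2*be^4*t^4 + S^2*de^4*t^4 + al*be*de*ga*t^4 + (3/4)*al^2*be^2*t^4 + (1/4)*al^2*de^2*t^4 + (3/4)*al^2*ga^2*t^4 + (3/8)*al^4*t^4 + (3/4)*be^2*de^2*t^4 + (1/4)*be^2*ga^2*t^4 + (3/8)*be^4*t^4 + (3/4)*de^2*ga^2*t^4 + (3/8)*de^4*t^4 + (3/8)*ga^4*t^4).

Definition G2 (x00r x00i x11r x11i al be ga de c : R) : R :=
  (0 - (1/8)*al^2*c^4 + (1/12)*al^2*c^6 - (1/8)*be^2*c^4 + (1/12)*be^2*c^6 - (1/2)*c^2*x11i^2 - (1/2)*c^2*x11r^2 - (1/8)*c^4*de^2 - (1/8)*c^4*ga^2 - (1/2)*c^4*x00i*x11i - (1/2)*c^4*x00r*x11r + (1/2)*c^4*x11i^2 + (1/2)*c^4*x11r^2 + (1/12)*c^6*de^2 + (1/12)*c^6*ga^2 + (1/3)*c^6*x00i*x11i - (1/6)*c^6*x00i^2 + (1/3)*c^6*x00r*x11r - (1/6)*c^6*x00r^2 - (1/6)*c^6*x11i^2 - (1/6)*c^6*x11r^2).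

Definition RA2 (x00r x00i x11r x11i al be ga de c s : R) : R :=
  ((1/2)*al^2*c^3*s + (1/2)*be^2*c^3*s + c*s*x11i^2 + c*s*x11r^2 + c*s^3*x11i^2 + c*s^3*x11r^2 + (1/2)*c^3*de^2*s + (1/2)*c^3*ga^2*s + 2*c^3*s*x00i*x11i + 2*c^3*s*x00r*x11r - c^3*s*x11i^2 - c^3*s*x11r^2).

Definition V2 (x00r x00i x11r x11i al be ga de : R) : R :=
  ((1/24)*al^2 + (1/24)*be^2 + (1/24)*de^2 + (1/24)*ga^2 + (1/6)*x00i*x11i + (1/6)*x00i^2 + (1/6)*x00r*x11r + (1/6)*x00r^2 + (1/6)*x11i^2 + (1/6)*x11r^2).

Definition G4 (x00r x00i x11r x11i al be ga de c : R) : R :=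
  (0 - (1/6)*al*be*c^6*de*ga + (1/4)*al*be*c^8*de*ga - (1/10)*al*be*c^10*de*ga - al*c^4*ga*x11i*x11r - (2/3)*al*c^6*ga*x00i*x11r - (2/3)*al*c^6*ga*x00r*x11i + 2*al*c^6*ga*x11i*x11r - (1/2)*al*c^8*ga*x00i*x00r + al*c^8*ga*x00i*x11r + al*c^8*ga*x00r*x11i - (3/2)*al*c^8*ga*x11i*x11r + (2/5)*al*c^10*ga*x00i*x00r - (2/5)*al*c^10*ga*x00i*x11r - (2/5)*al*c^10*ga*x00r*x11i + (2/5)*al*c^10*ga*x11i*x11r - (1/8)*al^2*be^2*c^6 + (3/16)*al^2*be^2*c^8 - (3/40)*al^2*be^2*c^10 - (1/4)*al^2*c^4*x11i^2 - (3/4)*al^2*c^4*x11r^2 - (1/24)*al^2*c^6*de^2 - (1/8)*al^2*c^6*ga^2 - (1/3)*al^2*c^6*x00i*x11i - al^2*c^6*x00r*x11r + (1/2)*al^2*c^6*x11i^2 + (3/2)*al^2*c^6*x11r^2 + (1/16)*al^2*c^8*de^2 + (3/16)*al^2*c^8*ga^2 + (1/2)*al^2*c^8*x00i*x11i - (1/8)*al^2*c^8*x00i^2 + (3/2)*al^2*c^8*x00r*x11r - (3/8)*al^2*c^8*x00r^2 - (3/8)*al^2*c^8*x11i^2 - (9/8)*al^2*c^8*x11r^2 - (1/40)*al^2*c^10*de^2 - (3/40)*al^2*c^10*ga^2 - (1/5)*al^2*c^10*x00i*x11i + (1/10)*al^2*c^10*x00i^2 - (3/5)*al^2*c^10*x00r*x11r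 + (3/10)*al^2*c^10*x00r^2 + (1/10)*al^2*c^10*x11i^2 + (3/10)*al^2*c^10*x11r^2 - (1/16)*al^4*c^6 + (3/32)*al^4*c^8 - (3/80)*al^4*c^10 - be*c^4*de*x11i*x11r - (2/3)*be*c^6*de*x00i*x11r - (2/3)*be*c^6*de*x00r*x11i + 2*be*c^6*de*x11i*x11r - (1/2)*be*c^8*de*x00i*x00r + be*c^8*de*x00i*x11r + be*c^8*de*x00r*x11i - (3/2)*be*c^8*de*x11i*x11r + (2/5)*be*c^10*de*x00i*x00r - (2/5)*be*c^10*de*x00i*x11r - (2/5)*be*c^10*de*x00r*x11i + (2/5)*be*c^10*de*x11i*x11r - (1/4)*be^2*c^4*x11i^2 - (3/4)*be^2*c^4*x11r^2 - (1/8)*be^2*c^6*de^2 - (1/24)*be^2*c^6*ga^2 - (1/3)*be^2*c^6*x00i*x11i - be^2*c^6*x00r*x11r + (1/2)*be^2*c^6*x11i^2 + (3/2)*be^2*c^6*x11r^2 + (3/16)*be^2*c^8*de^2 + (1/16)*be^2*c^8*ga^2 + (1/2)*be^2*c^8*x00i*x11i - (1/8)*be^2*c^8*x00i^2 + (3/2)*be^2*c^8*x00r*x11r - (3/8)*be^2*c^8*x00r^2 - (3/8)*be^2*c^8*x11i^2 - (9/8)*be^2*c^8*x11r^2 - (3/40)*be^2*c^10*de^2 - (1/40)*be^2*c^10*ga^2 - (1/5)*be^2*c^10*x00i*x11i + (1/10)*be^2*c^10*x00i^2 - (3/5)*be^2*c^10*x00r*x11r + (3/10)*be^2*c^10*x00r^2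 + (1/10)*be^2*c^10*x11i^2 + (3/10)*be^2*c^10*x11r^2 - (1/16)*be^4*c^6 + (3/32)*be^4*c^8 - (3/80)*be^4*c^10 - c^2*x11i^2*x11r^2 - (1/2)*c^2*x11i^4 - (1/2)*c^2*x11r^4 - (3/4)*c^4*de^2*x11i^2 - (1/4)*c^4*de^2*x11r^2 - (3/4)*c^4*ga^2*x11i^2 - (1/4)*c^4*ga^2*x11r^2 - c^4*x00i*x11i*x11r^2 - c^4*x00i*x11i^3 - c^4*x00r*x11i^2*x11r - c^4*x00r*x11r^3 + 2*c^4*x11i^2*x11r^2 + c^4*x11i^4 + c^4*x11r^4 - (1/8)*c^6*de^2*ga^2 - c^6*de^2*x00i*x11i - (1/3)*c^6*de^2*x00r*x11r + (3/2)*c^6*de^2*x11i^2 + (1/2)*c^6*de^2*x11r^2 - (1/16)*c^6*de^4 - c^6*ga^2*x00i*x11i - (1/3)*c^6*ga^2*x00r*x11r + (3/2)*c^6*ga^2*x11i^2 + (1/2)*c^6*ga^2*x11r^2 - (1/16)*c^6*ga^4 - (4/3)*c^6*x00i*x00r*x11i*x11r + 2*c^6*x00i*x11i*x11r^2 + 2*c^6*x00i*x11i^3 - c^6*x00i^2*x11i^2 - (1/3)*c^6*x00i^2*x11r^2 + 2*c^6*x00r*x11i^2*x11r + 2*c^6*x00r*x11r^3 - (1/3)*c^6*x00r^2*x11i^2 - c^6*x00r^2*x11r^2 - 2*c^6*x11i^2*x11r^2 - c^6*x11i^4 - c^6*x11r^4 + (3/16)*c^8*de^2*ga^2 + (3/2)*c^8*de^2*x00i*x11i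 - (3/8)*c^8*de^2*x00i^2 + (1/2)*c^8*de^2*x00r*x11r - (1/8)*c^8*de^2*x00r^2 - (9/8)*c^8*de^2*x11i^2 - (3/8)*c^8*de^2*x11r^2 + (3/32)*c^8*de^4 + (3/2)*c^8*ga^2*x00i*x11i - (3/8)*c^8*ga^2*x00i^2 + (1/2)*c^8*ga^2*x00r*x11r - (1/8)*c^8*ga^2*x00r^2 - (9/8)*c^8*ga^2*x11i^2 - (3/8)*c^8*ga^2*x11r^2 + (3/32)*c^8*ga^4 + 2*c^8*x00i*x00r*x11i*x11r - (1/2)*c^8*x00i*x00r^2*x11i - (3/2)*c^8*x00i*x11i*x11r^2 - (3/2)*c^8*x00i*x11i^3 - (1/2)*c^8*x00i^2*x00r*x11r + (3/2)*c^8*x00i^2*x11i^2 + (1/2)*c^8*x00i^2*x11r^2 - (1/2)*c^8*x00i^3*x11i - (3/2)*c^8*x00r*x11i^2*x11r - (3/2)*c^8*x00r*x11r^3 + (1/2)*c^8*x00r^2*x11i^2 + (3/2)*c^8*x00r^2*x11r^2 - (1/2)*c^8*x00r^3*x11r + c^8*x11i^2*x11r^2 + (1/2)*c^8*x11i^4 + (1/2)*c^8*x11r^4 - (3/40)*c^10*de^2*ga^2 - (3/5)*c^10*de^2*x00i*x11i + (3/10)*c^10*de^2*x00i^2 - (1/5)*c^10*de^2*x00r*x11r + (1/10)*c^10*de^2*x00r^2 + (3/10)*c^10*de^2*x11i^2 + (1/10)*c^10*de^2*x11r^2 - (3/80)*c^10*de^4 - (3/5)*c^10*ga^2*x00i*x11i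 + (3/10)*c^10*ga^2*x00i^2 - (1/5)*c^10*ga^2*x00r*x11r + (1/10)*c^10*ga^2*x00r^2 + (3/10)*c^10*ga^2*x11i^2 + (1/10)*c^10*ga^2*x11r^2 - (3/80)*c^10*ga^4 - (4/5)*c^10*x00i*x00r*x11i*x11r + (2/5)*c^10*x00i*x00r^2*x11i + (2/5)*c^10*x00i*x11i*x11r^2 + (2/5)*c^10*x00i*x11i^3 + (2/5)*c^10*x00i^2*x00r*x11r - (1/5)*c^10*x00i^2*x00r^2 - (3/5)*c^10*x00i^2*x11i^2 - (1/5)*c^10*x00i^2*x11r^2 + (2/5)*c^10*x00i^3*x11i - (1/10)*c^10*x00i^4 + (2/5)*c^10*x00r*x11i^2*x11r + (2/5)*c^10*x00r*x11r^3 - (1/5)*c^10*x00r^2*x11i^2 - (3/5)*c^10*x00r^2*x11r^2 + (2/5)*c^10*x00r^3*x11r - (1/10)*c^10*x00r^4 - (1/5)*c^10*x11i^2*x11r^2 - (1/10)*c^10*x11i^4 - (1/10)*c^10*x11r^4).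

Definition RA4 (x00r x00i x11r x11i al be ga de c s : R) : R :=
  (al*be*c^5*de*ga*s + al*be*c^5*de*ga*s^3 - al*be*c^7*de*ga*s + 4*al*c^3*ga*s*x11i*x11r + 4*al*c^3*ga*s^3*x11i*x11r + 4*al*c^3*ga*s^5*x11i*x11r + 4*al*c^5*ga*s*x00i*x11r + 4*al*c^5*ga*s*x00r*x11i - 8*al*c^5*ga*s*x11i*x11r + 4*al*c^5*ga*s^3*x00i*x11r + 4*al*c^5*ga*s^3*x00r*x11i - 4*al*c^5*ga*s^3*x11i*x11r + 4*al*c^7*ga*s*x00i*x00r - 4*al*c^7*ga*s*x00i*x11r - 4*al*c^7*ga*s*x00r*x11i + 4*al*c^7*ga*s*x11i*x11r + (3/4)*al^2*be^2*c^5*s + (3/4)*al^2*be^2*c^5*s^3 - (3/4)*al^2*be^2*c^7*s + al^2*c^3*s*x11i^2 + 3*al^2*c^3*s*x11r^2 + al^2*c^3*s^3*x11i^2 + 3*al^2*c^3*s^3*x11r^2 + al^2*c^3*s^5*x11i^2 + 3*al^2*c^3*s^5*x11r^2 + (1/4)*al^2*c^5*de^2*s + (1/4)*al^2*c^5*de^2*s^3 + (3/4)*al^2*c^5*ga^2*s + (3/4)*al^2*c^5*ga^2*s^3 + 2*al^2*c^5*s*x00i*x11i + 6*al^2*c^5*s*x00r*x11r - 2*al^2*c^5*s*x11i^2 - 6*al^2*c^5*s*x11r^2 + 2*al^2*c^5*s^3*x00i*x11i + 6*al^2*c^5*s^3*x00r*x11r - al^2*c^5*s^3*x11i^2 - 3*al^2*c^5*s^3*x11r^2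 - (1/4)*al^2*c^7*de^2*s - (3/4)*al^2*c^7*ga^2*s - 2*al^2*c^7*s*x00i*x11i + al^2*c^7*s*x00i^2 - 6*al^2*c^7*s*x00r*x11r + 3*al^2*c^7*s*x00r^2 + al^2*c^7*s*x11i^2 + 3*al^2*c^7*s*x11r^2 + (3/8)*al^4*c^5*s + (3/8)*al^4*c^5*s^3 - (3/8)*al^4*c^7*s + 4*be*c^3*de*s*x11i*x11r + 4*be*c^3*de*s^3*x11i*x11r + 4*be*c^3*de*s^5*x11i*x11r + 4*be*c^5*de*s*x00i*x11r + 4*be*c^5*de*s*x00r*x11i - 8*be*c^5*de*s*x11i*x11r + 4*be*c^5*de*s^3*x00i*x11r + 4*be*c^5*de*s^3*x00r*x11i - 4*be*c^5*de*s^3*x11i*x11r + 4*be*c^7*de*s*x00i*x00r - 4*be*c^7*de*s*x00i*x11r - 4*be*c^7*de*s*x00r*x11i + 4*be*c^7*de*s*x11i*x11r + be^2*c^3*s*x11i^2 + 3*be^2*c^3*s*x11r^2 + be^2*c^3*s^3*x11i^2 + 3*be^2*c^3*s^3*x11r^2 + be^2*c^3*s^5*x11i^2 + 3*be^2*c^3*s^5*x11r^2 + (3/4)*be^2*c^5*de^2*s + (3/4)*be^2*c^5*de^2*s^3 + (1/4)*be^2*c^5*ga^2*s + (1/4)*be^2*c^5*ga^2*s^3 + 2*be^2*c^5*s*x00i*x11i + 6*be^2*c^5*s*x00r*x11r - 2*be^2*c^5*s*x11i^2 - 6*be^2*c^5*s*x11r^2 + 2*be^2*c^5*s^3*x00i*x11i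 + 6*be^2*c^5*s^3*x00r*x11r - be^2*c^5*s^3*x11i^2 - 3*be^2*c^5*s^3*x11r^2 - (3/4)*be^2*c^7*de^2*s - (1/4)*be^2*c^7*ga^2*s - 2*be^2*c^7*s*x00i*x11i + be^2*c^7*s*x00i^2 - 6*be^2*c^7*s*x00r*x11r + 3*be^2*c^7*s*x00r^2 + be^2*c^7*s*x11i^2 + 3*be^2*c^7*s*x11r^2 + (3/8)*be^4*c^5*s + (3/8)*be^4*c^5*s^3 - (3/8)*be^4*c^7*s + 2*c*s*x11i^2*x11r^2 + c*s*x11i^4 + c*s*x11r^4 + 2*c*s^3*x11i^2*x11r^2 + c*s^3*x11i^4 + c*s^3*x11r^4 + 2*c*s^5*x11i^2*x11r^2 + c*s^5*x11i^4 + c*s^5*x11r^4 + 2*c*s^7*x11i^2*x11r^2 + c*s^7*x11i^4 + c*s^7*x11r^4 + 3*c^3*de^2*s*x11i^2 + c^3*de^2*s*x11r^2 + 3*c^3*de^2*s^3*x11i^2 + c^3*de^2*s^3*x11r^2 + 3*c^3*de^2*s^5*x11i^2 + c^3*de^2*s^5*x11r^2 + 3*c^3*ga^2*s*x11i^2 + c^3*ga^2*s*x11r^2 + 3*c^3*ga^2*s^3*x11i^2 + c^3*ga^2*s^3*x11r^2 + 3*c^3*ga^2*s^5*x11i^2 + c^3*ga^2*s^5*x11r^2 + 4*c^3*s*x00i*x11i*x11r^2 + 4*c^3*s*x00i*x11i^3 + 4*c^3*s*x00r*x11i^2*x11r + 4*c^3*s*x00r*x11r^3 - 6*c^3*s*x11i^2*x11r^2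 - 3*c^3*s*x11i^4 - 3*c^3*s*x11r^4 + 4*c^3*s^3*x00i*x11i*x11r^2 + 4*c^3*s^3*x00i*x11i^3 + 4*c^3*s^3*x00r*x11i^2*x11r + 4*c^3*s^3*x00r*x11r^3 - 4*c^3*s^3*x11i^2*x11r^2 - 2*c^3*s^3*x11i^4 - 2*c^3*s^3*x11r^4 + 4*c^3*s^5*x00i*x11i*x11r^2 + 4*c^3*s^5*x00i*x11i^3 + 4*c^3*s^5*x00r*x11i^2*x11r + 4*c^3*s^5*x00r*x11r^3 - 2*c^3*s^5*x11i^2*x11r^2 - c^3*s^5*x11i^4 - c^3*s^5*x11r^4 + (3/4)*c^5*de^2*ga^2*s + (3/4)*c^5*de^2*ga^2*s^3 + 6*c^5*de^2*s*x00i*x11i + 2*c^5*de^2*s*x00r*x11r - 6*c^5*de^2*s*x11i^2 - 2*c^5*de^2*s*x11r^2 + 6*c^5*de^2*s^3*x00i*x11i + 2*c^5*de^2*s^3*x00r*x11r - 3*c^5*de^2*s^3*x11i^2 - c^5*de^2*s^3*x11r^2 + (3/8)*c^5*de^4*s + (3/8)*c^5*de^4*s^3 + 6*c^5*ga^2*s*x00i*x11i + 2*c^5*ga^2*s*x00r*x11r - 6*c^5*ga^2*s*x11i^2 - 2*c^5*ga^2*s*x11r^2 + 6*c^5*ga^2*s^3*x00i*x11i + 2*c^5*ga^2*s^3*x00r*x11r - 3*c^5*ga^2*s^3*x11i^2 - c^5*ga^2*s^3*x11r^2 + (3/8)*c^5*ga^4*s + (3/8)*c^5*ga^4*s^3 +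 8*c^5*s*x00i*x00r*x11i*x11r - 8*c^5*s*x00i*x11i*x11r^2 - 8*c^5*s*x00i*x11i^3 + 6*c^5*s*x00i^2*x11i^2 + 2*c^5*s*x00i^2*x11r^2 - 8*c^5*s*x00r*x11i^2*x11r - 8*c^5*s*x00r*x11r^3 + 2*c^5*s*x00r^2*x11i^2 + 6*c^5*s*x00r^2*x11r^2 + 6*c^5*s*x11i^2*x11r^2 + 3*c^5*s*x11i^4 + 3*c^5*s*x11r^4 + 8*c^5*s^3*x00i*x00r*x11i*x11r - 4*c^5*s^3*x00i*x11i*x11r^2 - 4*c^5*s^3*x00i*x11i^3 + 6*c^5*s^3*x00i^2*x11i^2 + 2*c^5*s^3*x00i^2*x11r^2 - 4*c^5*s^3*x00r*x11i^2*x11r - 4*c^5*s^3*x00r*x11r^3 + 2*c^5*s^3*x00r^2*x11i^2 + 6*c^5*s^3*x00r^2*x11r^2 + 2*c^5*s^3*x11i^2*x11r^2 + c^5*s^3*x11i^4 + c^5*s^3*x11r^4 - (3/4)*c^7*de^2*ga^2*s - 6*c^7*de^2*s*x00i*x11i + 3*c^7*de^2*s*x00i^2 - 2*c^7*de^2*s*x00r*x11r + c^7*de^2*s*x00r^2 + 3*c^7*de^2*s*x11i^2 + c^7*de^2*s*x11r^2 - (3/8)*c^7*de^4*s - 6*c^7*ga^2*s*x00i*x11i + 3*c^7*ga^2*s*x00i^2 - 2*c^7*ga^2*s*x00r*x11r + c^7*ga^2*s*x00r^2 + 3*c^7*ga^2*s*x11i^2 + c^7*ga^2*s*x11r^2 -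 (3/8)*c^7*ga^4*s - 8*c^7*s*x00i*x00r*x11i*x11r + 4*c^7*s*x00i*x00r^2*x11i + 4*c^7*s*x00i*x11i*x11r^2 + 4*c^7*s*x00i*x11i^3 + 4*c^7*s*x00i^2*x00r*x11r - 6*c^7*s*x00i^2*x11i^2 - 2*c^7*s*x00i^2*x11r^2 + 4*c^7*s*x00i^3*x11i + 4*c^7*s*x00r*x11i^2*x11r + 4*c^7*s*x00r*x11r^3 - 2*c^7*s*x00r^2*x11i^2 - 6*c^7*s*x00r^2*x11r^2 + 4*c^7*s*x00r^3*x11r - 2*c^7*s*x11i^2*x11r^2 - c^7*s*x11i^4 - c^7*s*x11r^4).

Definition V4 (x00r x00i x11r x11i al be ga de : R) : R :=
  ((1/60)*al*be*de*ga + (1/10)*al*ga*x00i*x00r + (1/15)*al*ga*x00i*x11r + (1/15)*al*ga*x00r*x11i + (1/10)*al*ga*x11i*x11r + (1/80)*al^2*be^2 + (1/240)*al^2*de^2 + (1/80)*al^2*ga^2 + (1/30)*al^2*x00i*x11i + (1/40)*al^2*x00i^2 + (1/10)*al^2*x00r*x11r + (3/40)*al^2*x00r^2 + (1/40)*al^2*x11i^2 + (3/40)*al^2*x11r^2 + (1/160)*al^4 + (1/10)*be*de*x00i*x00r + (1/15)*be*de*x00i*x11r + (1/15)*be*de*x00r*x11i + (1/10)*be*de*x11i*x11r + (1/80)*be^2*de^2 + (1/240)*be^2*ga^2 + (1/30)*be^2*x00i*x11i + (1/40)*be^2*x00i^2 + (1/10)*be^2*x00r*x11r + (3/40)*be^2*x00r^2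 + (1/40)*be^2*x11i^2 + (3/40)*be^2*x11r^2 + (1/160)*be^4 + (1/80)*de^2*ga^2 + (1/10)*de^2*x00i*x11i + (3/40)*de^2*x00i^2 + (1/30)*de^2*x00r*x11r + (1/40)*de^2*x00r^2 + (3/40)*de^2*x11i^2 + (1/40)*de^2*x11r^2 + (1/160)*de^4 + (1/10)*ga^2*x00i*x11i + (3/40)*ga^2*x00i^2 + (1/30)*ga^2*x00r*x11r + (1/40)*ga^2*x00r^2 + (3/40)*ga^2*x11i^2 + (1/40)*ga^2*x11r^2 + (1/160)*ga^4 + (2/15)*x00i*x00r*x11i*x11r + (1/10)*x00i*x00r^2*x11i + (1/10)*x00i*x11i*x11r^2 + (1/10)*x00i*x11i^3 + (1/10)*x00i^2*x00r*x11r + (1/5)*x00i^2*x00r^2 + (1/10)*x00i^2*x11i^2 + (1/30)*x00i^2*x11r^2 + (1/10)*x00i^3*x11i + (1/10)*x00i^4 + (1/10)*x00r*x11i^2*x11r + (1/10)*x00r*x11r^3 + (1/30)*x00r^2*x11i^2 + (1/10)*x00r^2*x11r^2 + (1/10)*x00r^3*x11r + (1/10)*x00r^4 + (1/5)*x11i^2*x11r^2 + (1/10)*x11i^4 + (1/10)*x11r^4).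

Definition lam0 (x00r x00i x01r x01i x10r x10i x11r x11i : R) : R :=
  ((1/3) - (1/3)*x00i*x11i + (1/3)*x00i^2 - (1/3)*x00r*x11r + (1/3)*x00r^2 + (1/3)*x01i^2 + (1/3)*x01r^2 - (1/3)*x11i^2 - (1/3)*x11r^2).

Definition lam1 (x00r x00i x01r x01i x10r x10i x11r x11i : R) : R :=
  ((2/3) - (1/3)*x00i*x11i - (2/3)*x00i^2 - (1/3)*x00r*x11r - (2/3)*x00r^2 + (1/3)*x11i^2 + (1/3)*x11r^2).

Definition lam2 (x00r x00i x01r x01i x10r x10i x11r x11i : R) : R :=
  ((2/3)*x00i*x01i + x00i*x10i + (2/3)*x00r*x01r + x00r*x10r + x01i*x11i + x01r*x11r + (2/3)*x10i*x11i + (2/3)*x10r*x11r).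

Definition lam3 (x00r x00i x01r x01i x10r x10i x11r x11i : R) : R :=
  (0 - (2/3)*x00i*x01r + x00i*x10r + (2/3)*x00r*x01i - x00r*x10i + x01i*x11r - x01r*x11i - (2/3)*x10i*x11r + (2/3)*x10r*x11i).

Lemma pyth x : cos x ^ 2 + sin x ^ 2 = 1.
Proof. rewrite <- (sin2_cos2 x). unfold Rsqr. ring. Qed.

Lemma per_cos b : cos (2*PI + - b) = cos (0 + - b).
Proof. rewrite cos_plus, cos_2PI, sin_2PI, Rplus_0_l. ring. Qed.

Lemma per_sin b : sin (2*PI + - b) = sin (0 + - b).
Proof. rewrite sin_plus, cos_2PI, sin_2PI, Rplus_0_l. ring. Qed.

Lemma int_g2 Ar Ai t al be ga de b :
  is_RInt (fun g => W2 Ar Ai t al be ga de (cos (g + - b)) (sin (g + - b))) 0 (2*PI)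
    (2*PI*k2 Ar Ai t al be ga de).
Proof.
  replace (2*PI*k2 Ar Ai t al be ga de) with
    (minus ((fun g => k2 Ar Ai t al be ga de * g + Q2 Ar Ai t al be ga de (cos (g + - b)) (sin (g + - b))) (2*PI))
           ((fun g => k2 Ar Ai t al be ga de * g + Q2 Ar Ai t al be ga de (cos (g + - b)) (sin (g + - b))) 0)).
  2:{ unfold minus, plus, opp; simpl. rewrite per_cos, per_sin. field. }
  apply (is_RInt_derive (fun g => k2 Ar Ai t al be ga de * g + Q2 Ar Ai t al be ga de (cos (g + - b)) (sin (g + - b)))).
  - intros x _. unfold Q2. auto_derive; [auto|].
    match goal with |- ?L = _ =>
      transitivity (W2 Ar Ai t al be ga de (cos (x + - b)) (sin (x + - b))
        - (cos (x + - b) ^ 2 + sin (x + - b) ^ 2 - 1) * R2 Ar Ai t al be ga de (cos (x + - b)) (sin (x + - b))) end.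
    + unfold W2, R2, k2. field.
    + rewrite pyth. ring.
  - intros x _. match goal with |- continuous ?f _ => apply (ex_derive_continuous f) end. unfold W2. auto_derive. auto.
Qed.

Lemma int_g4 Ar Ai t al be ga de b :
  is_RInt (fun g => (W2 Ar Ai t al be ga de (cos (g + - b)) (sin (g + - b)))^2) 0 (2*PI)
    (2*PI*k4 Ar Ai t al be ga de).
Proof.
  replace (2*PI*k4 Ar Ai t al be ga de) with
    (minus ((fun g => k4 Ar Ai t al be ga de * g + Q4 Ar Ai t al be ga de (cos (g + - b)) (sin (g + - b))) (2*PI))
           ((fun g => k4 Ar Ai t al be ga de * g + Q4 Ar Ai t al be ga de (cos (g + - b)) (sin (g + - b))) 0)).
  2:{ unfold minus, plus, opp; simpl. rewrite per_cos, per_sin. field. }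
  apply (is_RInt_derive (fun g => k4 Ar Ai t al be ga de * g + Q4 Ar Ai t al be ga de (cos (g + - b)) (sin (g + - b)))).
  - intros x _. unfold Q4. auto_derive; [auto|].
    match goal with |- ?L = _ =>
      transitivity ((W2 Ar Ai t al be ga de (cos (x + - b)) (sin (x + - b)))^2
        - (cos (x + - b) ^ 2 + sin (x + - b) ^ 2 - 1) * R4 Ar Ai t al be ga de (cos (x + - b)) (sin (x + - b))) end.
    + unfold W2, R4, k4. field.
    + rewrite pyth. ring.
  - intros x _. match goal with |- continuous ?f _ => apply (ex_derive_continuous f) end. unfold W2. auto_derive. auto.
Qed.

Lemma int_a2 x00r x00i x11r x11i al be ga de :
  is_RInt (fun a => k2 (cos a ^2 * x00r + sin a ^2 * x11r) (cos a ^2 * x00i + sin a ^2 * x11i)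
                       (cos a * sin a) al be ga de * sin a * cos a) 0 (PI/2)
    (V2 x00r x00i x11r x11i al be ga de).
Proof.
  replace (V2 x00r x00i x11r x11i al be ga de) with
    (minus (G2 x00r x00i x11r x11i al be ga de (cos (PI/2))) (G2 x00r x00i x11r x11i al be ga de (cos 0))).
  2:{ unfold minus, plus, opp; simpl. rewrite cos_PI2, cos_0. unfold G2, V2. field. }
  apply (is_RInt_derive (fun a => G2 x00r x00i x11r x11i al be ga de (cos a))).
  - intros x _. unfold G2. auto_derive; [auto|].
    match goal with |- ?L = _ =>
      transitivity (k2 (cos x ^2 * x00r + sin x ^2 * x11r) (cos x ^2 * x00i + sin x ^2 * x11i)
                       (cos x * sin x) al be ga de * sin x * cos x
        - (cos x ^ 2 + sin x ^ 2 - 1) * RA2 x00r x00i x11r x11i al be ga de (cos x) (sin x)) end.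
    + unfold k2, RA2. field.
    + rewrite pyth. ring.
  - intros x _. match goal with |- continuous ?f _ => apply (ex_derive_continuous f) end. unfold k2. auto_derive. auto.
Qed.

Lemma int_a4 x00r x00i x11r x11i al be ga de :
  is_RInt (fun a => k4 (cos a ^2 * x00r + sin a ^2 * x11r) (cos a ^2 * x00i + sin a ^2 * x11i)
                       (cos a * sin a) al be ga de * sin a * cos a) 0 (PI/2)
    (V4 x00r x00i x11r x11i al be ga de).
Proof.
  replace (V4 x00r x00i x11r x11i al be ga de) with
    (minus (G4 x00r x00i x11r x11i al be ga de (cos (PI/2))) (G4 x00r x00i x11r x11i al be ga de (cos 0))).
  2:{ unfold minus, plus, opp; simpl. rewrite cos_PI2, cos_0. unfold G4, V4. field. }
  apply (is_RInt_derive (fun a => G4 x00r x00i x11r x11i al be ga de (cos a))).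
  - intros x _. unfold G4. auto_derive; [auto|].
    match goal with |- ?L = _ =>
      transitivity (k4 (cos x ^2 * x00r + sin x ^2 * x11r) (cos x ^2 * x00i + sin x ^2 * x11i)
                       (cos x * sin x) al be ga de * sin x * cos x
        - (cos x ^ 2 + sin x ^ 2 - 1) * RA4 x00r x00i x11r x11i al be ga de (cos x) (sin x)) end.
    + unfold k4, RA4. field.
    + rewrite pyth. ring.
  - intros x _. match goal with |- continuous ?f _ => apply (ex_derive_continuous f) end. unfold k4. auto_derive. auto.
Qed.

Definition x00r (X : mat2) := fst (X 0%nat 0%nat).
Definition x00i (X : mat2) := snd (X 0%nat 0%nat).
Definition x01r (X : mat2) := fst (X 0%nat 1%nat).
Definition x01i (X : mat2) := snd (X 0%nat 1%nat).
Definition x10r (X : mat2) := fst (X 1%nat 0%nat).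
Definition x10i (X : mat2) := snd (X 1%nat 0%nat).
Definition x11r (X : mat2) := fst (X 1%nat 1%nat).
Definition x11i (X : mat2) := snd (X 1%nat 1%nat).
Definition alX X := x01r X + x10r X.
Definition beX X := x10i X - x01i X.
Definition gaX X := x01i X + x10i X.
Definition deX X := x01r X - x10r X.
Definition ArA X a := cos a ^2 * x00r X + sin a ^2 * x11r X.
Definition AiA X a := cos a ^2 * x00i X + sin a ^2 * x11i X.

Lemma expval_hopf X a b g :
  expval X (hopf_psi a b g) =
  (ArA X a + (cos a * sin a) * (cos (g + - b) * alX X + sin (g + - b) * beX X),
   AiA X a + (cos a * sin a) * (cos (g + - b) * gaX X + sin (g + - b) * deX X)).
Proof.
  unfold expval, hopf_psi, cis, ArA, AiA, alX, beX, gaX, deX,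
    x00r, x00i, x01r, x01i, x10r, x10i, x11r, x11i; simpl.
  rewrite cos_plus, sin_plus, cos_neg, sin_neg.
  destruct (X 0%nat 0%nat) as [p00 q00]; destruct (X 0%nat 1%nat) as [p01 q01];
  destruct (X 1%nat 0%nat) as [p10 q10]; destruct (X 1%nat 1%nat) as [p11 q11].
  unfold Cmult, Cplus, Cconj, RtoC; simpl.
  pose proof (pyth b) as Hb; pose proof (pyth g) as Hg.
  f_equal.
  - transitivity ((cos a)^2 * p00 * (cos b ^2 + sin b ^2) + (sin a)^2 * p11 * (cos g ^2 + sin g ^2)
      + cos a * sin a * ((cos g * cos b + sin g * sin b) * (p01 + p10) + (sin g * cos b - cos g * sin b) * (q10 - q01))).
    + ring.
    + rewrite Hb, Hg. ring.
  - transitivity ((cos a)^2 * q00 * (cos b ^2 + sin b ^2) + (sin a)^2 * q11 * (cos g ^2 + sin g ^2)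
      + cos a * sin a * ((cos g * cos b + sin g * sin b) * (q01 + q10) + (sin g * cos b - cos g * sin b) * (p01 - p10))).
    + ring.
    + rewrite Hb, Hg. ring.
Qed.

Lemma cmod2 (x y : R) : Cmod (x, y) ^ 2 = x ^ 2 + y ^ 2.
Proof.
  unfold Cmod. cbn [fst snd]. rewrite pow2_sqrt; [ring|].
  apply Rplus_le_le_0_compat; apply pow2_ge_0.
Qed.

Lemma cmod2_hopf X a b g :
  Cmod (expval X (hopf_psi a b g)) ^ 2 =
  W2 (ArA X a) (AiA X a) (cos a * sin a) (alX X) (beX X) (gaX X) (deX X) (cos (g + - b)) (sin (g + - b)).
Proof. rewrite expval_hopf, cmod2. unfold W2. ring. Qed.

Lemma haar_eval (f : vec2 -> R) (K : R -> R) (V : R) :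
  (forall a b, is_RInt (fun g => f (hopf_psi a b g) * sin a * cos a) 0 (2*PI) (K a)) ->
  is_RInt (fun a => 2*PI*K a) 0 (PI/2) V ->
  haar_int f = / (2 * PI ^ 2) * V.
Proof.
  intros H1 H2. unfold haar_int. f_equal.
  rewrite (RInt_ext _ (fun a => 2*PI*K a)).
  - apply is_RInt_unique; auto.
  - intros a _.
    rewrite (RInt_ext _ (fun _ => K a)).
    + rewrite RInt_const. unfold scal; simpl. unfold mult; simpl. ring.
    + intros b _. apply is_RInt_unique. auto.
Qed.

Lemma haar2 X :
  haar_int (fun psi => Cmod (expval X psi) ^ 2) =
  2 * V2 (x00r X) (x00i X) (x11r X) (x11i X) (alX X) (beX X) (gaX X) (deX X).
Proof.
  rewrite (haar_eval _ (fun a => 2*PI*k2 (ArA X a) (AiA X a) (cos a * sin a) (alX X) (beX X) (gaX X) (deX X) * sin a * cos a)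
     (4*PI^2 * V2 (x00r X) (x00i X) (x11r X) (x11i X) (alX X) (beX X) (gaX X) (deX X))).
  - field. apply PI_neq0.
  - intros a b.
    apply (is_RInt_ext (fun g => scal (sin a * cos a) (W2 (ArA X a) (AiA X a) (cos a * sin a) (alX X) (beX X) (gaX X) (deX X) (cos (g + - b)) (sin (g + - b))))).
    + intros g _. rewrite cmod2_hopf. unfold scal; simpl; unfold mult; simpl. ring.
    + replace (2*PI*k2 (ArA X a) (AiA X a) (cos a * sin a) (alX X) (beX X) (gaX X) (deX X) * sin a * cos a)
        with (scal (sin a * cos a) (2*PI*k2 (ArA X a) (AiA X a) (cos a * sin a) (alX X) (beX X) (gaX X) (deX X))).
      * apply (is_RInt_scal (fun g => (W2 (ArA X a) (AiA X a) (cos a * sin a) (alX X) (beX X) (gaX X) (deX X) (cos (g + - b)) (sin (g + - b)))) 0 (2*PI) (sin a * cos a)). apply int_g2.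
      * unfold scal; simpl; unfold mult; simpl. ring.
  - apply (is_RInt_ext (fun a => scal (4*PI^2) (k2 (ArA X a) (AiA X a) (cos a * sin a) (alX X) (beX X) (gaX X) (deX X) * sin a * cos a))).
    + intros a _. unfold scal; simpl; unfold mult; simpl. ring.
    + replace (4*PI^2 * V2 (x00r X) (x00i X) (x11r X) (x11i X) (alX X) (beX X) (gaX X) (deX X))
        with (scal (4*PI^2) (V2 (x00r X) (x00i X) (x11r X) (x11i X) (alX X) (beX X) (gaX X) (deX X))).
      * apply (is_RInt_scal (fun a => k2 (ArA X a) (AiA X a) (cos a * sin a) (alX X) (beX X) (gaX X) (deX X) * sin a * cos a) 0 (PI/2) (4*PI^2)). unfold ArA, AiA. apply int_a2.
      * unfold scal; simpl; unfold mult; simpl. ring.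
Qed.

Lemma haar4 X :
  haar_int (fun psi => Cmod (expval X psi) ^ 4) =
  2 * V4 (x00r X) (x00i X) (x11r X) (x11i X) (alX X) (beX X) (gaX X) (deX X).
Proof.
  rewrite (haar_eval _ (fun a => 2*PI*k4 (ArA X a) (AiA X a) (cos a * sin a) (alX X) (beX X) (gaX X) (deX X) * sin a * cos a)
     (4*PI^2 * V4 (x00r X) (x00i X) (x11r X) (x11i X) (alX X) (beX X) (gaX X) (deX X))).
  - field. apply PI_neq0.
  - intros a b.
    apply (is_RInt_ext (fun g => scal (sin a * cos a) ((W2 (ArA X a) (AiA X a) (cos a * sin a) (alX X) (beX X) (gaX X) (deX X) (cos (g + - b)) (sin (g + - b)))^2))).
    + intros g _. replace (Cmod (expval X (hopf_psi a b g)) ^ 4) with ((Cmod (expval X (hopf_psi a b g)) ^ 2)^2) by ring.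
      rewrite cmod2_hopf. unfold scal; simpl; unfold mult; simpl. ring.
    + replace (2*PI*k4 (ArA X a) (AiA X a) (cos a * sin a) (alX X) (beX X) (gaX X) (deX X) * sin a * cos a)
        with (scal (sin a * cos a) (2*PI*k4 (ArA X a) (AiA X a) (cos a * sin a) (alX X) (beX X) (gaX X) (deX X))).
      * apply (is_RInt_scal (fun g => ((W2 (ArA X a) (AiA X a) (cos a * sin a) (alX X) (beX X) (gaX X) (deX X) (cos (g + - b)) (sin (g + - b)))^2)) 0 (2*PI) (sin a * cos a)). apply int_g4.
      * unfold scal; simpl; unfold mult; simpl. ring.
  - apply (is_RInt_ext (fun a => scal (4*PI^2) (k4 (ArA X a) (AiA X a) (cos a * sin a) (alX X) (beX X) (gaX X) (deX X) * sin a * cos a))).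
    + intros a _. unfold scal; simpl; unfold mult; simpl. ring.
    + replace (4*PI^2 * V4 (x00r X) (x00i X) (x11r X) (x11i X) (alX X) (beX X) (gaX X) (deX X))
        with (scal (4*PI^2) (V4 (x00r X) (x00i X) (x11r X) (x11i X) (alX X) (beX X) (gaX X) (deX X))).
      * apply (is_RInt_scal (fun a => k4 (ArA X a) (AiA X a) (cos a * sin a) (alX X) (beX X) (gaX X) (deX X) * sin a * cos a) 0 (PI/2) (4*PI^2)). unfold ArA, AiA. apply int_a4.
      * unfold scal; simpl; unfold mult; simpl. ring.
Qed.

Lemma final_cert x00r x00i x01r x01i x10r x10i x11r x11i :
  x00r^2+x00i^2+x10r^2+x10i^2-1 = 0 ->
  x01r^2+x01i^2+x11r^2+x11i^2-1 = 0 ->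
  x00r*x01r+x00i*x01i+x10r*x11r+x10i*x11i = 0 ->
  x00r*x01i-x00i*x01r+x10r*x11i-x10i*x11r = 0 ->
  5 * (2 * V4 x00r x00i x11r x11i (x01r + x10r) (x10i - x01i) (x01i + x10i) (x01r - x10r)
       - (2 * V2 x00r x00i x11r x11i (x01r + x10r) (x10i - x01i) (x01i + x10i) (x01r - x10r))^2)
  - (1 - 2 * V2 x00r x00i x11r x11i (x01r + x10r) (x10i - x01i) (x01i + x10i) (x01r - x10r))^2 = 0
  /\ 0 <= 1 - 2 * V2 x00r x00i x11r x11i (x01r + x10r) (x10i - x01i) (x01i + x10i) (x01r - x10r).
Proof.
  intros H1 H2 H3 H4. split.
  - transitivity (lam0 x00r x00i x01r x01i x10r x10i x11r x11i * (x00r^2+x00i^2+x10r^2+x10i^2-1)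
      + lam1 x00r x00i x01r x01i x10r x10i x11r x11i * (x01r^2+x01i^2+x11r^2+x11i^2-1)
      + lam2 x00r x00i x01r x01i x10r x10i x11r x11i * (x00r*x01r+x00i*x01i+x10r*x11r+x10i*x11i)
      + lam3 x00r x00i x01r x01i x10r x10i x11r x11i * (x00r*x01i-x00i*x01r+x10r*x11i-x10i*x11r)).
    + unfold V4, V2, lam0, lam1, lam2, lam3. field.
    + rewrite H1, H2, H3, H4. ring.
  - assert (E : 6 * (1 - 2 * V2 x00r x00i x11r x11i (x01r + x10r) (x10i - x01i) (x01i + x10i) (x01r - x10r))
       = ((x00r - x11r)^2 + (x00i - x11i)^2 + 2*(x01r^2+x01i^2+x10r^2+x10i^2))
         - 3 * (x00r^2+x00i^2+x10r^2+x10i^2-1) - 3 * (x01r^2+x01i^2+x11r^2+x11i^2-1)).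
    { unfold V2. field. }
    rewrite H1, H2 in E.
    assert (0 <= (x00r - x11r)^2 + (x00i - x11i)^2 + 2*(x01r^2+x01i^2+x10r^2+x10i^2)).
    { assert (0 <= (x00r - x11r)^2) by apply pow2_ge_0.
      assert (0 <= (x00i - x11i)^2) by apply pow2_ge_0.
      assert (0 <= x01r^2) by apply pow2_ge_0. assert (0 <= x01i^2) by apply pow2_ge_0.
      assert (0 <= x10r^2) by apply pow2_ge_0. assert (0 <= x10i^2) by apply pow2_ge_0. lra. }
    lra.
Qed.

Theorem proposition9 (X : mat2) (hX : unitary2 X) :
  let F := haar_int (fun psi => Cmod (expval X psi) ^ 2) in
  let D := sqrt (haar_int (fun psi => Cmod (expval X psi) ^ 4) - F ^ 2) in
  D = (1 - F) / sqrt 5.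
Proof.
  intros F D. unfold D, F. rewrite haar2, haar4.
  pose proof (hX 0%nat 0%nat ltac:(lia) ltac:(lia)) as U00.
  pose proof (hX 1%nat 1%nat ltac:(lia) ltac:(lia)) as U11.
  pose proof (hX 0%nat 1%nat ltac:(lia) ltac:(lia)) as U01.
  simpl in U00, U11, U01.
  assert (G1 := f_equal fst U00). assert (G2 := f_equal fst U11).
  assert (G3 := f_equal fst U01). assert (G4 := f_equal snd U01).
  clear U00 U11 U01.
  unfold alX, beX, gaX, deX, x00r, x00i, x01r, x01i, x10r, x10i, x11r, x11i.
  destruct (X 0%nat 0%nat) as [a0 b0]; destruct (X 0%nat 1%nat) as [c0 d0];
  destruct (X 1%nat 0%nat) as [e0 f0]; destruct (X 1%nat 1%nat) as [g0 h0].
  unfold Cmult, Cplus, Cconj, RtoC in G1, G2, G3, G4; simpl in G1, G2, G3, G4.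
  destruct (final_cert a0 b0 c0 d0 e0 f0 g0 h0) as [Hc Hpos];
    [nra | nra | nra | nra | ].
  cbn [fst snd].
  set (v2 := V2 a0 b0 g0 h0 (c0 + e0) (f0 - d0) (d0 + f0) (c0 - e0)) in *.
  set (v4 := V4 a0 b0 g0 h0 (c0 + e0) (f0 - d0) (d0 + f0) (c0 - e0)) in *.
  cbn [fst snd].
  assert (S5 : 0 < sqrt 5) by (apply sqrt_lt_R0; lra).
  assert (P2 : 0 <= (1 - 2 * v2)^2) by apply pow2_ge_0.
  apply sqrt_lem_1.
  - lra.
  - unfold Rdiv. apply Rmult_le_pos; [lra|]. left. apply Rinv_0_lt_compat. exact S5.
  - assert (Q : sqrt 5 * sqrt 5 = 5) by (apply sqrt_sqrt; lra).
    replace ((1 - 2*v2)/sqrt 5 * ((1 - 2*v2)/sqrt 5)) with ((1-2*v2)^2 / (sqrt 5 * sqrt 5)) by (field; lra).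
    rewrite Q. lra.
Qed.
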